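(* Let $(\mathcal{X},d)$ be a finite metric space with at least two points, $\mu\in\mathcal{M}_+(\mathcal{X})$ with $\mu(x)\in\{0,1\}$ for all $x$, $s_x\in(0,1]$ for $x\in\mathcal{X}$, and let $\hat\mu_{s_\mathcal{X}}$ be the Bernoulli-model estimator. Then for every $p\ge1$, $C>0$, $q>1$, $L\in\mathbb{N}$, $$\mathbb{E}\big[\mathrm{KR}_{p,C}(\hat\mu_{s_\mathcal{X}},\mu)\big]\le\mathcal{E}_{p,\mathcal{X}}(C,q,L)^{1/p}\cdot\begin{cases}\big(2\sum_{x\in\mathcal{X}}(1-s_x)\big)^{1/p}, & \text{if } C\le\max\{2h_{q,L}(L),\min_{x\ne x'}d(x,x')\},\\[0.5ex]\big(\sum_{x\in\mathcal{X}}\frac{1-s_x}{s_x}\big)^{1/(2p)}, & \text{otherwise.}\end{cases}$$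
   Context: $\mathrm{KR}_{p,C}(\mu,\nu)=\big(\min_{\pi\in\Pi_\le(\mu,\nu)}\sum_{x,x'}d^p(x,x')\pi(x,x')+C^p(\frac{\mathbb{M}(\mu)+\mathbb{M}(\nu)}2-\mathbb{M}(\pi))\big)^{1/p}$, $\Pi_\le(\mu,\nu)$ the non-negative $\pi$ with row sums $\le\mu$ and column sums $\le\nu$, $\mathbb{M}$ total mass. Bernoulli model: independent $B_x\sim\mathrm{Ber}(s_x)$, $\hat\mu_{s_\mathcal{X}}=\sum_{x\in\mathrm{supp}(\mu)}\frac{B_x}{s_x}\delta_x$. $h_{q,L}(k)=\frac{q^{1-k}-q^{-L}}{q-1}\mathrm{diam}(\mathcal{X})$; $Q_j$ ($j=0..L$) a minimal-cardinality $q^{-j}\mathrm{diam}(\mathcal{X})$-cover of $\mathcal{X}$ by points of $\mathcal{X}$; $A_{q,p,L,\mathcal{X}}(l)=\mathrm{diam}(\mathcal{X})^p2^{p-1}(q^{-Lp}|\mathcal{X}|^{1/2}+(\frac q{q-1})^p\sum_{j=l}^Lq^{p-jp}|Q_j|^{1/2})$. The constant (same as in the Poisson model): $\mathcal{E}_{p,\mathcal{X}}(C,q,L)=\frac{C^p}2$ if $C\le\max\{2h_{q,L}(L),\min_{x\ne x'}d(x,x')\}$; otherwise $(\frac{C^p}2-2^{p-1}h_{q,L}(0)^p)+A_{q,p,L,\mathcal{X}}(1)$ if $C\ge2h_{q,L}(0)$; otherwise $A_{q,p,L,\mathcal{X}}(l)$ for the $l\in\{1,\dots,L\}$ with $2h_{q,L}(l)\le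 C<2h_{q,L}(l-1)$. *)

(* Defs.v *)
From HB Require Import structures.
From mathcomp Require Import all_boot all_order all_algebra.
From mathcomp Require Import classical_sets reals exp.
Set Implicit Arguments. Unset Strict Implicit. Unset Printing Implicit Defensive.
Import Order.TTheory GRing.Theory Num.Theory.
Local Open Scope ring_scope.
Local Open Scope classical_set_scope.

Section KRDefs.
Variables (R : realType) (T : finType).

Definition is_metric (d : T -> T -> R) : Prop :=
  [/\ forall x y, 0 <= d x y,
      forall x y, d x y = 0 <-> x = y,
      forall x y, d x y = d y x &
      forall x y z, d x z <= d x y + d y z].

Definition mass (mu : T -> R) : R := \sum_(x : T) mu x.

Definition subcoupling (mu nu : T -> R) (pi : T -> T -> R) : Prop :=
  [/\ forall x x', 0 <= pi x x',
      forall x, \sum_(x' : T) pi x x' <= mu x &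
      forall x', \sum_(x : T) pi x x' <= nu x'].

Definition plan_mass (pi : T -> T -> R) : R := \sum_(x : T) \sum_(x' : T) pi x x'.

Definition KR_cost (d : T -> T -> R) (p C : R) (mu nu : T -> R)
  (pi : T -> T -> R) : R :=
  \sum_(x : T) \sum_(x' : T) powR (d x x') p * pi x x'
  + powR C p * ((mass mu + mass nu) / 2 - plan_mass pi).

(* KR_{p,C}(mu,nu); the minimum over the compact polytope Pi_<= is written as
   an infimum (it is attained). *)
Definition KR (d : T -> T -> R) (p C : R) (mu nu : T -> R) : R :=
  powR (inf [set c | exists pi, subcoupling mu nu pi /\ c = KR_cost d p C mu nu pi])
       p^-1.

Definition bern_est (s : T -> R) (mu : T -> R) (b : {ffun T -> bool}) : T -> R :=
  fun x => if mu x != 0 then (b x)%:R / s x else 0.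

Definition bern_prob (s : T -> R) (b : {ffun T -> bool}) : R :=
  \prod_(x : T) (if b x then s x else 1 - s x).

Definition expected_KR (d : T -> T -> R) (p C : R) (s mu : T -> R) : R :=
  \sum_(b : {ffun T -> bool}) bern_prob s b * KR d p C (bern_est s mu b) mu.

Definition diam (d : T -> T -> R) : R :=
  \big[Num.max/0]_(x : T) \big[Num.max/0]_(y : T) d x y.

(* min_{x <> x'} d(x, x') (the default value diam is never reached when
   |T| >= 2, since every distance is <= diam) *)
Definition min_dist (d : T -> T -> R) : R :=
  \big[Num.min/diam d]_(x : T) \big[Num.min/diam d]_(y : T | y != x) d x y.

Definition hqL (d : T -> T -> R) (q : R) (L k : nat) : R :=
  (powR q (1 - k%:R) - powR q (- L%:R)) / (q - 1) * diam d.

Definition is_cover (d : T -> T -> R) (r : R) (Q : {set T}) : bool :=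
  [forall x : T, [exists y in Q, d x y <= r]].

Definition cover_num (d : T -> T -> R) (r : R) : nat :=
  \big[minn/#|T|]_(Q : {set T} | is_cover d r Q) #|Q|.

Definition Qcard (d : T -> T -> R) (q : R) (j : nat) : nat :=
  cover_num d (powR q (- j%:R) * diam d).

Definition Aconst (d : T -> T -> R) (q p : R) (L l : nat) : R :=
  powR (diam d) p * powR 2 (p - 1) *
  (powR q (- L%:R * p) * Num.sqrt (#|T|%:R)
   + powR (q / (q - 1)) p *
     \sum_(l <= j < L.+1) powR q (p - j%:R * p) * Num.sqrt ((Qcard d q j)%:R)).

(* E_{p,X}(C,q,L).  In the last case the l in {1..L} with
   2h(l) <= C < 2h(l-1) is unique, so the value A(l) is written as the sum of
   A(l) over the l in {1..L} satisfying that condition. *)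
Definition Econst (d : T -> T -> R) (p C q : R) (L : nat) : R :=
  if C <= Num.max (2 * hqL d q L L) (min_dist d) then powR C p / 2
  else if 2 * hqL d q L 0 <= C then
    (powR C p / 2 - powR 2 (p - 1) * powR (hqL d q L 0) p) + Aconst d q p L 1
  else \sum_(1 <= l < L.+1 | (2 * hqL d q L l <= C) && (C < 2 * hqL d q L l.-1))
         Aconst d q p L l.

End KRDefs.

(* Main.v *)
Require Import Defs.
From HB Require Import structures.
From mathcomp Require Import all_boot all_order all_algebra.
From mathcomp Require Import classical_sets reals exp.
From mathcomp Require Import ring lra zify.
Import Order.TTheory GRing.Theory Num.Theory.
Local Open Scope ring_scope.

Section All.
Variables (R : realType) (T : finType).
Section Transport.
Implicit Types (a b : T -> R) (pi : T -> T -> R) (F G : T -> T).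

Lemma eqle (x y : R) : x = y -> x <= y. Proof. by move->. Qed.

Definition cs F (a : T -> R) (c : T) : R := \sum_(x | F x == c) a x.
Definition SF F a b : R := \sum_c `|cs F a c - cs F b c|.
Definition rows pi x : R := \sum_y pi x y.
Definition cols pi y : R := \sum_x pi x y.
Definition posp (z : R) := Num.max z 0.

Definition Qinv (d : T -> T -> R) p a b F B pi :=
  [/\ subcoupling a b pi, (forall x y, F x != F y -> pi x y = 0),
      (forall c, cs F (fun x => a x - rows pi x) c = posp (cs F a c - cs F b c)),
      (forall c, cs F (fun y => b y - cols pi y) c = posp (cs F b c - cs F a c)) &
      \sum_x \sum_y powR (d x y) p * pi x y <= B].

Lemma cs_part F f : \sum_c cs F f c = \sum_x f x.
Proof. by rewrite [RHS](partition_big F xpredT). Qed.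

Lemma csB F f g c : cs F (fun x => f x - g x) c = cs F f c - cs F g c.
Proof. by rewrite /cs sumrB. Qed.

Lemma posp_sum z : posp z + posp (- z) = `|z|.
Proof. rewrite /posp; have [h|h] := lerP 0 z; [rewrite ger0_norm // | rewrite ltr0_norm //]; case: (leP z 0); case: (leP (-z) 0); lra. Qed.

Lemma minE (u v : R) : 0 <= u -> 0 <= v -> u * v / Num.max u v = Num.min u v.
Proof.
move=> u0 v0; case: (leP u v) => h.
  have [v0'|vn0] := eqVneq v 0; first by rewrite v0' mulr0 mul0r; apply/le_anti; rewrite u0 -v0' h.
  by rewrite mulfK.
by rewrite mulrAC divff ?mul1r // gt_eqF // (le_lt_trans v0 h).
Qed.

Lemma minpos (u v : R) : u - Num.min u v = posp (u - v).
Proof. by rewrite /posp; case: (leP u v) => h; case: (leP (u - v) 0) => h'; lra. Qed.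

Lemma min_half (u v : R) : Num.min u v = (u + v - `|u - v|) / 2.
Proof. by case: (leP u v) => h; [rewrite ler0_norm ?subr_le0 // | rewrite gtr0_norm ?subr_gt0 //]; lra. Qed.

Lemma ratio_le1 (u m : R) : 0 <= u <= m -> u / m <= 1.
Proof.
case/andP=> u0 um; have [->|mn0] := eqVneq m 0; first by rewrite invr0 mulr0.
by rewrite ler_pdivrMr ?mul1r // lt_def mn0 (le_trans u0 um).
Qed.

Lemma base_plan (d : T -> T -> R) p a b : 0 < p -> (forall x, d x x = 0) ->
  (forall x, 0 <= a x) -> (forall x, 0 <= b x) ->
  exists pi, Qinv d p a b id 0 pi.
Proof.
move=> p0 dxx a0 b0.
pose pi x y := if x == y then Num.min (a x) (b x) else 0.
have rw : forall x, rows pi x = Num.min (a x) (b x).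
  move=> x; rewrite /rows (bigD1 x) //= /pi eqxx big1 ?addr0 // => y.
  by rewrite eq_sym => /negbTE ->.
have cw : forall y, cols pi y = Num.min (a y) (b y).
  move=> y; rewrite /cols (bigD1 y) //= /pi eqxx big1 ?addr0 // => x.
  by move=> /negbTE ->.
have csid : forall f c, cs id f c = f c by move=> f c; rewrite /cs big_pred1_eq.
exists pi; split.
- split.
  + by move=> x y; rewrite /pi; case: ifP => // _; rewrite le_min a0 b0.
  + by move=> x; have := rw x; rewrite /rows => ->; rewrite ge_min lexx.
  + by move=> y; have := cw y; rewrite /cols => ->; rewrite ge_min lexx orbT.
- by move=> x y /= /negbTE; rewrite /pi => ->.
- by move=> c; rewrite !csid rw minpos.
- by move=> c; rewrite !csid cw minC minpos.
- rewrite big1 // => x _; rewrite big1 // => y _; rewrite /pi.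
  case: eqP => [->|_]; last by rewrite mulr0.
  by rewrite dxx powR0 ?mul0r // gt_eqF.
Qed.

Lemma step_plan (d : T -> T -> R) p a b F G B pi w :
  (forall x y, F x = F y -> G x = G y) ->
  (forall x y, G x = G y -> powR (d x y) p <= w) -> 0 <= w ->
  Qinv d p a b F B pi ->
  exists pi', Qinv d p a b G (B + w * ((SF F a b - SF G a b) / 2)) pi'.
Proof.
move=> nest wb w0; rewrite /Qinv => -[[pi0 ra cb] supp csa csb cost].
pose a' x := a x - rows pi x; pose b' y := b y - cols pi y.
have a'0 x : 0 <= a' x by rewrite /a' subr_ge0; exact: ra.
have b'0 y : 0 <= b' y by rewrite /b' subr_ge0; exact: cb.
pose A' := cs G a'; pose B' := cs G b'.
have A'0 c : 0 <= A' c by apply: sumr_ge0.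
have B'0 c : 0 <= B' c by apply: sumr_ge0.
pose M c := Num.max (A' c) (B' c).
pose rho x y := if G x == G y then a' x * b' y / M (G x) else 0.
have rho0 x y : 0 <= rho x y.
  rewrite /rho; case: ifP => // _; apply: divr_ge0; first exact: mulr_ge0.
  by rewrite le_max A'0.
have rr x : rows rho x = a' x * (B' (G x) / M (G x)).
  have -> : rows rho x = \sum_(y | G y == G x) (a' x / M (G x)) * b' y.
    rewrite /rows [RHS]big_mkcond; apply: eq_bigr => y _ /=; rewrite /rho eq_sym.
    by case: ifP => _ //; rewrite mulrAC.
  by rewrite -mulr_sumr mulrAC mulrA.
have cr y : cols rho y = A' (G y) * (b' y / M (G y)).
  have -> : cols rho y = \sum_(x | G x == G y) a' x * (b' y / M (G y)).
    rewrite /cols [RHS]big_mkcond; apply: eq_bigr => x _ /=; rewrite /rho.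
    by case: eqP => // ->; rewrite mulrA.
  by rewrite -mulr_suml.
have rrle x : rows rho x <= a' x.
  rewrite rr -[X in _ <= X]mulr1 ler_wpM2l // ratio_le1 // B'0 le_max lexx orbT //.
have crle y : cols rho y <= b' y.
  rewrite cr mulrCA -[X in _ <= X]mulr1 ler_wpM2l // ratio_le1 // A'0 le_max lexx //.
have key c : cs G (rows pi) c = cs G (cols pi) c.
  have e1 : cs G (rows pi) c = \sum_(x | G x == c) \sum_(y | G y == c) pi x y.
    apply: eq_bigr => x /eqP Gx; rewrite /rows [RHS]big_mkcond; apply: eq_bigr => y _.
    case: ifP => // /negbT Gy; apply: supp; apply: contra Gy => /eqP /nest <-.
    by rewrite Gx.
  have e2 : cs G (cols pi) c = \sum_(y | G y == c) \sum_(x | G x == c) pi x y.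
    apply: eq_bigr => y /eqP Gy; rewrite /cols [RHS]big_mkcond; apply: eq_bigr => x _.
    case: ifP => // /negbT Gx; apply: supp; apply: contra Gx => /eqP /nest ->.
    by rewrite Gy.
  by rewrite e1 e2 exchange_big.
have AB c : A' c - B' c = cs G a c - cs G b c.
  by rewrite /A' /B' !csB key; lra.
have csr c : cs G (rows rho) c = A' c * B' c / M c.
  rewrite /cs; under eq_bigr => x /eqP Gx do rewrite rr Gx.
  by rewrite -mulr_suml mulrA.
have csc c : cs G (cols rho) c = A' c * B' c / M c.
  rewrite /cs; under eq_bigr => y /eqP Gy do rewrite cr Gy.
  by rewrite -mulr_sumr -mulr_suml mulrA.
exists (fun x y => pi x y + rho x y); split.
- split.
  + by move=> x y; apply: addr_ge0.
  + move=> x; rewrite /rows big_split /=; have := rrle x; rewrite /a' /rows; lra.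
  + move=> y; rewrite /cols big_split /=; have := crle y; rewrite /b' /cols; lra.
- move=> x y Gxy; rewrite /rho (negbTE Gxy) addr0; apply: supp.
  by apply: contra Gxy => /eqP /nest ->.
- move=> c; have -> : cs G (fun x => a x - rows (fun x0 y => pi x0 y + rho x0 y) x) c
                     = A' c - cs G (rows rho) c.
    rewrite /A' -csB; apply: eq_bigr => x _; rewrite /a' /rows big_split /=; lra.
  by rewrite csr minE // minpos AB.
- move=> c; have -> : cs G (fun y => b y - cols (fun x0 y => pi x0 y + rho x0 y) y) c
                     = B' c - cs G (cols rho) c.
    rewrite /B' -csB; apply: eq_bigr => y _; rewrite /b' /cols big_split /=; lra.
  by rewrite csc minE // minC minpos -opprB AB opprB.
- have -> : \sum_x \sum_y powR (d x y) p * (pi x y + rho x y) =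
            \sum_x \sum_y powR (d x y) p * pi x y + \sum_x \sum_y powR (d x y) p * rho x y.
    by rewrite -big_split /=; apply: eq_bigr => x _; rewrite -big_split /=;
       apply: eq_bigr => y _; rewrite mulrDr.
  apply: lerD => //.
  have le1 : \sum_x \sum_y powR (d x y) p * rho x y <= w * \sum_x rows rho x.
    rewrite mulr_sumr; apply: ler_sum => x _; rewrite /rows mulr_sumr; apply: ler_sum => y _.
    have [/eqP Gxy|Gxy] := boolP (G x == G y).
      by apply: ler_wpM2r => //; apply: wb.
    by rewrite /rho (negbTE Gxy) !mulr0.
  apply: (le_trans le1); apply: ler_wpM2l => //; rewrite le_eqVlt; apply/orP; left; apply/eqP.
  rewrite -(cs_part G); under eq_bigr => c _ do rewrite csr minE // min_half.
  rewrite -mulr_suml sumrB big_split /= /A' /B' !cs_part /a' /b'.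
  have hF : \sum_x (a x - rows pi x) + \sum_x (b x - cols pi x) = SF F a b.
    rewrite -(cs_part F) -(cs_part F (fun y => b y - cols pi y)) -big_split /=.
    apply: eq_bigr => c _; rewrite csa csb -[cs F b c - _]opprB posp_sum //.
  rewrite hF /SF; congr ((_ - _) / 2); apply: eq_bigr => c _.
  by rewrite -/(cs G a' c) -/(cs G b' c) -/(A' c) -/(B' c) AB.
Qed.

Lemma Qinv_ext (d : T -> T -> R) p a b F G B pi : F =1 G ->
  Qinv d p a b F B pi -> Qinv d p a b G B pi.
Proof.
move=> FG; have ecs : forall f c, cs F f c = cs G f c.
  by move=> f c; apply: eq_bigl => x; rewrite FG.
rewrite /Qinv => -[h1 h2 h3 h4 h5]; split => //.
- by move=> x y; rewrite -!FG; apply: h2.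
- by move=> c; rewrite -!ecs.
- by move=> c; rewrite -!ecs.
Qed.

Lemma iter_plan (d : T -> T -> R) p a b (Fl : nat -> T -> T) (wl : nat -> R) N :
  0 < p -> (forall x, d x x = 0) ->
  (forall x, 0 <= a x) -> (forall x, 0 <= b x) ->
  (forall x, Fl N x = x) ->
  (forall j x y, (j < N)%N -> Fl j.+1 x = Fl j.+1 y -> Fl j x = Fl j y) ->
  (forall j x y, (j < N)%N -> Fl j x = Fl j y -> powR (d x y) p <= wl j) ->
  (forall j, 0 <= wl j) ->
  forall m, (m <= N)%N -> exists pi, Qinv d p a b (Fl m)
    (\sum_(m <= j < N) wl j * ((SF (Fl j.+1) a b - SF (Fl j) a b) / 2)) pi.
Proof.
move=> p0 dxx a0 b0 FN nest wb w0.
suff H : forall t, (t <= N)%N -> exists pi, Qinv d p a b (Fl (N - t)%N)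
    (\sum_((N - t)%N <= j < N) wl j * ((SF (Fl j.+1) a b - SF (Fl j) a b) / 2)) pi.
  by move=> m hm; have := H (N - m)%N (leq_subr _ _); rewrite subKn.
elim=> [_|t IH ht].
  have [pi hpi] := @base_plan d p a b p0 dxx a0 b0.
  exists pi; rewrite subn0 big_geq //; apply: Qinv_ext hpi => x; by rewrite FN.
have [pi hpi] := IH (ltnW ht).
have e : (N - t = (N - t.+1).+1)%N by lia.
rewrite e in hpi.
have lt : (N - t.+1 < N)%N by lia.
have n1 : forall x y, Fl (N - t.+1).+1 x = Fl (N - t.+1).+1 y -> Fl (N - t.+1)%N x = Fl (N - t.+1)%N y.
  by move=> x y; apply: nest.
have w1 : forall x y, Fl (N - t.+1)%N x = Fl (N - t.+1)%N y -> powR (d x y) p <= wl (N - t.+1)%N.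
  by move=> x y; apply: wb.
have [pi' hpi'] := @step_plan d p a b _ _ _ pi _ n1 w1 (w0 _) hpi.
by exists pi'; rewrite big_ltn // addrC.
Qed.

Lemma cost_Qinv (d : T -> T -> R) p C a b F B pi :
  Qinv d p a b F B pi -> 0 <= C ->
  KR_cost d p C a b pi <= B + powR C p * (SF F a b / 2).
Proof.
rewrite /Qinv => -[[pi0 ra cb] supp csa csb cost] C0.
rewrite /KR_cost; apply: lerD => //; apply: eqle; congr (_ * _).
have e1 : mass a - plan_mass pi = \sum_c posp (cs F a c - cs F b c).
  by rewrite /mass /plan_mass -sumrB -(eq_bigr _ (fun c _ => csa c)) cs_part.
have e2 : mass b - plan_mass pi = \sum_c posp (cs F b c - cs F a c).
  by rewrite /mass /plan_mass exchange_big -sumrB -(eq_bigr _ (fun c _ => csb c)) cs_part.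
have : SF F a b = \sum_c posp (cs F a c - cs F b c) + \sum_c posp (cs F b c - cs F a c).
  rewrite -big_split; apply: eq_bigr => c _ /=; by rewrite -[cs F b c - _]opprB posp_sum.
lra.
Qed.

Lemma telescope (wl S : nat -> R) m N : (m < N)%N -> (forall j, 0 <= wl j) ->
  (forall j, 0 <= S j) ->
  \sum_(m <= j < N) wl j * ((S j.+1 - S j) / 2) <=
  \sum_(m <= j < N) wl j / 2 * S j.+1 - wl m / 2 * S m.
Proof.
move=> mN w0 S0.
have -> : \sum_(m <= j < N) wl j * ((S j.+1 - S j) / 2) =
  \sum_(m <= j < N) wl j / 2 * S j.+1 - \sum_(m <= j < N) wl j / 2 * S j.
  by rewrite -sumrB; apply: eq_bigr => j _; ring.
rewrite lerD2l lerN2 big_ltn // lerDl; apply: sumr_ge0 => j _.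
by apply: mulr_ge0 => //; apply: divr_ge0.
Qed.
Lemma cost_ge0 (d : T -> T -> R) p C a b pi : 0 <= C -> subcoupling a b pi ->
  0 <= KR_cost d p C a b pi.
Proof.
move=> C0 [pi0 ra cb]; rewrite /KR_cost; apply: addr_ge0.
  by apply: sumr_ge0 => x _; apply: sumr_ge0 => y _; apply: mulr_ge0 => //; apply: powR_ge0.
apply: mulr_ge0; first exact: powR_ge0.
have h1 : plan_mass pi <= mass a by apply: ler_sum => x _; exact: ra.
have h2 : plan_mass pi <= mass b.
  by rewrite /plan_mass exchange_big; apply: ler_sum => x _; exact: cb.
rewrite subr_ge0 ler_pdivlMr //; lra.
Qed.

Lemma KR_le (d : T -> T -> R) p C a b pi : 0 < p -> 0 <= C -> subcoupling a b pi ->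
  KR d p C a b <= powR (KR_cost d p C a b pi) p^-1.
Proof.
move=> p0 C0 spi; rewrite /KR.
set S := (X in inf X).
have Sc : S (KR_cost d p C a b pi) by exists pi.
have lb : lbound S 0 by move=> c [pi' [sp ->]]; exact: cost_ge0.
have hl : has_lbound S by exists 0.
apply: ge0_ler_powR; first by rewrite invr_ge0 ltW.
- rewrite nnegrE; apply: lb_le_inf => //; by exists (KR_cost d p C a b pi).
- by rewrite nnegrE; apply: cost_ge0.
- by apply: ge_inf.
Qed.
End Transport.

Section Prob.

Lemma CS (I : finType) (P u : I -> R) : (forall i, 0 <= P i) ->
  (\sum_i P i * u i) ^+ 2 <= (\sum_i P i) * (\sum_i P i * u i ^+ 2).
Proof.
move=> P0; set S0 := \sum_i P i; set S1 := \sum_i P i * u i; set S2 := \sum_i P i * u i ^+ 2.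
have key t : 0 <= S2 - 2 * t * S1 + t ^+ 2 * S0.
  have : 0 <= \sum_i P i * (u i - t) ^+ 2.
    by apply: sumr_ge0 => i _; apply: mulr_ge0 => //; apply: sqr_ge0.
  suff -> : \sum_i P i * (u i - t) ^+ 2 = S2 - 2 * t * S1 + t ^+ 2 * S0 by [].
  rewrite (eq_bigr (fun i => P i * u i ^+ 2 - 2 * t * (P i * u i) + t ^+ 2 * P i)); last first.
    by move=> i _; ring.
  by rewrite big_split sumrB /= -!mulr_sumr.
have [S00|S0n0] := eqVneq S0 0.
  have Pz : forall i, P i = 0.
    move=> i; apply/eqP; move/eqP: S00; rewrite psumr_eq0 => [/allP H|]; last by move=> j _.
    by apply: H; rewrite mem_index_enum.
  rewrite S00 mul0r /S1 big1 ?expr0n //= => i _; by rewrite Pz mul0r.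
have S0p : 0 < S0 by rewrite lt_def S0n0 sumr_ge0.
have := key (S1 / S0).
have -> : S2 - 2 * (S1 / S0) * S1 + (S1 / S0) ^+ 2 * S0 = (S0 * S2 - S1 ^+ 2) / S0.
  by field.
by rewrite ler_pdivlMr // mul0r subr_ge0.
Qed.

Definition wgt (s : T -> R) x (bt : bool) : R := if bt then s x else 1 - s x.
Definition Ex (s : T -> R) (X : {ffun T -> bool} -> R) : R :=
  \sum_b bern_prob s b * X b.

Variable s : T -> R.
Hypothesis s01 : forall x, 0 < s x <= 1.

Lemma P_ge0 b : 0 <= bern_prob s b.
Proof.
apply: prodr_ge0 => x _; case: (b x); have := s01 x; lra.
Qed.

Lemma ExP (phi : T -> bool -> R) : Ex s (fun b => \prod_x phi x (b x)) =
  \prod_x (s x * phi x true + (1 - s x) * phi x false).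
Proof.
have -> : \prod_x (s x * phi x true + (1 - s x) * phi x false) =
   \prod_x \sum_(bt : bool) (wgt s x bt * phi x bt).
  by apply: eq_bigr => x _; rewrite big_bool.
rewrite bigA_distr_bigA /Ex /bern_prob; apply: eq_bigr => b _.
by rewrite big_split.
Qed.

Lemma Ex_ext X Y : (forall b, X b = Y b) -> Ex s X = Ex s Y.
Proof. by move=> h; apply: eq_bigr => b _; rewrite h. Qed.



Lemma ExD X Y : Ex s (fun b => X b + Y b) = Ex s X + Ex s Y.
Proof. by rewrite /Ex -big_split; apply: eq_bigr => b _; rewrite mulrDr. Qed.

Lemma ExZ c X : Ex s (fun b => c * X b) = c * Ex s X.
Proof. by rewrite /Ex mulr_sumr; apply: eq_bigr => b _; rewrite mulrCA. Qed.

Lemma Ex_const c : Ex s (fun _ => c) = c.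
Proof.
have e : forall b : {ffun T -> bool}, c = c * \prod_x (fun (_ : T) (_ : bool) => (1 : R)) x (b x).
  by move=> b; rewrite big1 ?mulr1.
rewrite (@Ex_ext _ _ e) ExZ (ExP (fun _ _ => 1)) big1 ?mulr1 // => x _; by rewrite !mulr1 addrC subrK.
Qed.

Lemma Ex_sum (I : finType) (Pr : pred I) (X : I -> {ffun T -> bool} -> R) :
  Ex s (fun b => \sum_(i | Pr i) X i b) = \sum_(i | Pr i) Ex s (X i).
Proof.
rewrite /Ex; under eq_bigr do rewrite mulr_sumr.
by rewrite exchange_big.
Qed.

Lemma Ex_le X Y : (forall b, X b <= Y b) -> Ex s X <= Ex s Y.
Proof. by move=> h; apply: ler_sum => b _; apply: ler_wpM2l => //; apply: P_ge0. Qed.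

Lemma Ex1 x (f : bool -> R) : Ex s (fun b => f (b x)) = s x * f true + (1 - s x) * f false.
Proof.
pose phi z bt := if z == x then f bt else 1.
have -> : Ex s (fun b => f (b x)) = Ex s (fun b => \prod_z phi z (b z)).
  apply: Ex_ext => b; rewrite (bigD1 x) //= /phi eqxx big1 ?mulr1 //.
  by move=> z /negbTE ->.
rewrite ExP (bigD1 x) //= /phi eqxx big1 ?mulr1 // => z /negbTE ->.
by rewrite !mulr1 addrC subrK.
Qed.

Lemma Ex2 x y (f g : bool -> R) : x != y ->
  Ex s (fun b => f (b x) * g (b y)) =
  (s x * f true + (1 - s x) * f false) * (s y * g true + (1 - s y) * g false).
Proof.
move=> xy; have yx : (y == x) = false by rewrite eq_sym (negbTE xy).
pose phi z bt := if z == x then f bt else if z == y then g bt else 1.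
have -> : Ex s (fun b => f (b x) * g (b y)) = Ex s (fun b => \prod_z phi z (b z)).
  apply: Ex_ext => b; rewrite (bigD1 x) //= (bigD1 y) /=; last by rewrite eq_sym.
  rewrite /phi eqxx yx eqxx big1 ?mulr1 //.
  by move=> z /andP[/negbTE -> /negbTE ->].
rewrite ExP (bigD1 x) //= (bigD1 y) /=; last by rewrite eq_sym.
rewrite /phi eqxx yx eqxx big1 ?mulr1 //.
by move=> z /andP[/negbTE -> /negbTE ->]; rewrite !mulr1 addrC subrK.
Qed.


Variable mu : T -> R.
Hypothesis mu01 : forall x, mu x = 0 \/ mu x = 1.

Definition del x (bt : bool) : R := (if mu x != 0 then bt%:R / s x else 0) - mu x.

Lemma del_est b x : bern_est s mu b x - mu x = del x (b x).
Proof. by []. Qed.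

Lemma Edel x : s x * del x true + (1 - s x) * del x false = 0.
Proof.
have := s01 x => /andP[s0 s1]; rewrite /del.
case: (mu01 x) => ->; rewrite ?eqxx ?oner_neq0 /=; first by rewrite !subr0 !mulr0 addr0.
by rewrite mul0r; field; rewrite gt_eqF.
Qed.

Lemma Edel2 x : s x * del x true ^+ 2 + (1 - s x) * del x false ^+ 2 <= (1 - s x) / s x.
Proof.
have := s01 x => /andP[s0 s1]; rewrite /del.
case: (mu01 x) => ->; rewrite ?eqxx ?oner_neq0 /=.
  by rewrite !subr0 expr0n /= !mulr0 addr0; apply: divr_ge0; lra.
rewrite mul0r; apply: eqle; field; by rewrite gt_eqF.
Qed.

Lemma Edel_abs x : s x * `|del x true| + (1 - s x) * `|del x false| <= 2 * (1 - s x).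
Proof.
have := s01 x => /andP[s0 s1]; rewrite /del.
case: (mu01 x) => ->; rewrite ?eqxx ?oner_neq0 /=.
  by rewrite !subr0 normr0 !mulr0 addr0; lra.
have h : 1 <= 1 / s x by rewrite ler_pdivlMr // mul1r.
rewrite mul0r sub0r normrN normr1 ger0_norm ?subr_ge0 //.
apply: eqle; field; by rewrite gt_eqF.
Qed.

Lemma Evar (A : pred T) : Ex s (fun b => (\sum_(x | A x) del x (b x)) ^+ 2) =
  \sum_(x | A x) (s x * del x true ^+ 2 + (1 - s x) * del x false ^+ 2).
Proof.
have e : forall b : {ffun T -> bool}, (\sum_(x | A x) del x (b x)) ^+ 2 =
   \sum_(x | A x) \sum_(y | A y) del x (b x) * del y (b y).
  by move=> b; rewrite expr2 mulr_suml; apply: eq_bigr => x _; rewrite mulr_sumr.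
rewrite (@Ex_ext _ _ e) Ex_sum; apply: eq_bigr => x Ax.
rewrite Ex_sum (bigD1 x) //= big1 ?addr0.
  by rewrite (Ex1 x (fun bt => del x bt ^+ 2)) /= !expr2.
move=> y /andP[_ yx]; rewrite (@Ex2 x y (del x) (del y)); last by rewrite eq_sym.
by rewrite Edel mul0r.
Qed.

Lemma le_sqrt (m V : R) : 0 <= m -> m ^+ 2 <= V -> m <= Num.sqrt V.
Proof.
move=> m0 h; rewrite -(ger0_norm m0) -sqrtr_sqr ler_sqrt //.
exact: le_trans (sqr_ge0 m) h.
Qed.

Lemma Eabs_sqrt (X : {ffun T -> bool} -> R) :
  Ex s (fun b => `|X b|) <= Num.sqrt (Ex s (fun b => X b ^+ 2)).
Proof.
apply: le_sqrt; first by apply: sumr_ge0 => b _; apply: mulr_ge0 => //; apply: P_ge0.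
have := @CS {ffun T -> bool} (bern_prob s) (fun b => `|X b|) P_ge0.
have -> : \sum_b bern_prob s b = 1.
  by have := Ex_const 1; rewrite /Ex; under eq_bigr do rewrite mulr1.
rewrite mul1r => h; apply: (le_trans h); apply: eqle; apply: eq_bigr => b _ /=.
by rewrite real_normK ?num_real.
Qed.

Lemma SF_del (F : T -> T) b : SF F (bern_est s mu b) mu =
  \sum_c `|\sum_(x | F x == c) del x (b x)|.
Proof. by apply: eq_bigr => c _; rewrite -csB. Qed.

Lemma ESF (F : T -> T) (Qs : {set T}) : (forall x, F x \in Qs) ->
  Ex s (fun b => SF F (bern_est s mu b) mu) <=
  Num.sqrt (#|Qs|%:R) * Num.sqrt (\sum_x (1 - s x) / s x).
Proof.
move=> FQ.
have v0 x : 0 <= (1 - s x) / s x by have := s01 x; move=> /andP[h1 h2]; apply: divr_ge0; lra.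
pose V c := \sum_(x | F x == c) (1 - s x) / s x.
have V0 c : 0 <= V c by apply: sumr_ge0.
rewrite (@Ex_ext _ _ (SF_del F)) Ex_sum.
apply: (@le_trans _ _ (\sum_c (c \in Qs)%:R * Num.sqrt (V c))).
  apply: ler_sum => c _; have [cQ|cQ] := boolP (c \in Qs).
    rewrite mul1r; apply: (le_trans (Eabs_sqrt _)); rewrite ler_sqrt //.
    rewrite Evar; apply: ler_sum => x _; exact: Edel2.
  rewrite mul0r; apply: eqle; rewrite -[RHS](Ex_const 0); apply: Ex_ext => b.
  rewrite big_pred0 ?normr0 // => x; apply/negbTE; apply: contra cQ => /eqP <-.
  exact: FQ.
rewrite -sqrtrM ?ler0n //; apply: le_sqrt.
  by apply: sumr_ge0 => c _; apply: mulr_ge0 => //; apply: sqrtr_ge0.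
apply: (le_trans (@CS T (fun c => (c \in Qs)%:R) (fun c => Num.sqrt (V c)) _)); first by move=> c.
have -> : \sum_c ((c \in Qs)%:R : R) = #|Qs|%:R.
  rewrite (eq_bigr (fun c => if c \in Qs then 1 else 0)); last by move=> c _; case: (c \in Qs).
  by rewrite -big_mkcond /= sumr_const.
apply: ler_wpM2l => //; rewrite -[X in _ <= X](cs_part F (fun x => (1 - s x) / s x)); apply: ler_sum => c _.
rewrite /= sqr_sqrtr //; case: (c \in Qs); rewrite ?mul1r ?mul0r //.
Qed.

Lemma ESF1 : Ex s (fun b => SF id (bern_est s mu b) mu) <= 2 * \sum_x (1 - s x).
Proof.
rewrite (@Ex_ext _ _ (SF_del id)) Ex_sum mulr_sumr; apply: ler_sum => c _.
rewrite (@Ex_ext _ (fun b => `|del c (b c)|)); last by move=> b; rewrite big_pred1_eq.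
by rewrite (Ex1 c (fun bt => `|del c bt|)); apply: Edel_abs.
Qed.
End Prob.

Section Geo.
Variables (d : T -> T -> R) (q : R) (L : nat) (x0 : T).
Hypothesis dm : is_metric d.
Hypothesis q1 : 1 < q.

Lemma d_ge0 x y : 0 <= d x y. Proof. by case: dm. Qed.
Lemma dxx x : d x x = 0. Proof. by case: dm => _ h _ _; apply/h. Qed.
Lemma dsym x y : d x y = d y x. Proof. by case: dm. Qed.
Lemma dtri x y z : d x z <= d x y + d y z. Proof. by case: dm. Qed.

Lemma diam_ge0 : 0 <= diam d.
Proof. by rewrite /diam; rewrite (bigD1 x0) //= le_max (bigD1 x0) //= le_max dxx lexx. Qed.

Lemma d_le_diam x y : d x y <= diam d.
Proof. by rewrite /diam (bigD1 x) //= le_max (bigD1 y) //= le_max lexx. Qed.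

Definition rad (j : nat) := powR q (- j%:R) * diam d.
Lemma rad_ge0 j : 0 <= rad j.
Proof. by apply: mulr_ge0; [apply: powR_ge0 | apply: diam_ge0]. Qed.

Lemma powR_1m (x : R) : powR q (1 - x) = q * powR q (- x).
Proof. rewrite powRD ?powRr1 //; last by apply/implyP => _; rewrite gt_eqF // (lt_trans ltr01 q1).
  by rewrite ltW // (lt_trans ltr01 q1).
Qed.

Lemma hqL_step j : hqL d q L j = rad j + hqL d q L j.+1.
Proof.
have e : 1 - (j.+1)%:R = - (j%:R) :> R by rewrite -natr1; ring.
rewrite /hqL /rad e powR_1m.
have : q - 1 != 0 by rewrite subr_eq0 gt_eqF.
move=> h; field; done.
Qed.

Lemma hqL_top : hqL d q L L.+1 = 0.
Proof.
have e : 1 - (L.+1)%:R = - (L%:R) :> R by rewrite -natr1; ring.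
by rewrite /hqL e subrr !mul0r.
Qed.

Lemma hqL_L : hqL d q L L = powR q (- L%:R) * diam d.
Proof. by rewrite hqL_step hqL_top addr0. Qed.

Lemma hqL_ge0 j : (j <= L.+1)%N -> 0 <= hqL d q L j.
Proof.
move=> hj; rewrite /hqL; apply: mulr_ge0; last exact: diam_ge0.
apply: divr_ge0; last by rewrite subr_ge0 ltW.
rewrite subr_ge0; apply: ler_powR; first by rewrite ltW.
have : (j%:R <= L.+1%:R :> R) by rewrite ler_nat.
rewrite -natr1; lra.
Qed.

Lemma hqL_le j : hqL d q L j <= q / (q - 1) * powR q (- j%:R) * diam d.
Proof.
rewrite /hqL powR_1m; apply: ler_wpM2r; first exact: diam_ge0.
rewrite mulrAC ler_pM2r ?invr_gt0 ?subr_gt0 // gerBl; exact: powR_ge0.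
Qed.

Lemma cover_exists r : 0 <= r -> exists Q, is_cover d r Q && (#|Q| <= cover_num d r)%N.
Proof.
move=> r0; rewrite /cover_num.
apply: (big_ind (fun v => exists Q, is_cover d r Q && (#|Q| <= v)%N)).
- exists [set: T]%SET; rewrite cardsT leqnn andbT; apply/forallP => x; apply/existsP; exists x.
  by rewrite finset.in_setT dxx.
- move=> v1 v2 [Q1 /andP[c1 h1]] [Q2 /andP[c2 h2]].
  case: (leqP v1 v2) => h.
    by exists Q1; rewrite c1.
  by exists Q2; rewrite c2.
- by move=> Q cQ; exists Q; rewrite cQ leqnn.
Qed.

Definition Qj (j : nat) : {set T} :=
  odflt [set: T]%SET [pick Q : {set T} | is_cover d (rad j) Q && (#|Q| <= Qcard d q j)%N].

Lemma Qj_spec j : is_cover d (rad j) (Qj j) && (#|Qj j| <= Qcard d q j)%N.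
Proof.
rewrite /Qj; case: pickP => [Q //|H].
have [Q hQ] := @cover_exists (rad j) (rad_ge0 j).
have HQ := H Q; rewrite /= in HQ.
have e : Qcard d q j = cover_num d (rad j) by rewrite /Qcard /rad.
by rewrite e hQ in HQ.
Qed.

Definition gm (j : nat) (y : T) : T :=
  if j == 0%N then x0 else odflt y [pick z in Qj j | d y z <= rad j].

Lemma gm_spec j y : d y (gm j y) <= rad j /\ ((0 < j)%N -> gm j y \in Qj j).
Proof.
rewrite /gm; case: eqP => [->|/eqP j0].
  by split => //; rewrite /rad oppr0 powRr0 mul1r d_le_diam.
case: pickP => [z /andP[zQ dz] //|H].
have /andP[/forallP /(_ y) /existsP [z /andP[zQ dz]] _] := Qj_spec j.
by move: (H z); rewrite zQ dz.
Qed.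

Fixpoint Fk (k : nat) : T -> T :=
  match k with 0%N => id | k'.+1 => fun x => gm (L - k') (Fk k' x) end.

Definition Fl (j : nat) : T -> T := Fk (L.+1 - j).

Lemma Fl_top x : Fl L.+1 x = x.
Proof. rewrite /Fl subnn; reflexivity. Qed.

Lemma Fk_S k x : Fk k.+1 x = gm (L - k) (Fk k x).
Proof. reflexivity. Qed.

Lemma Fl_step j x : (j <= L)%N -> Fl j x = gm j (Fl j.+1 x).
Proof.
move=> hj; have e : (L.+1 - j = (L - j).+1)%N by lia.
have e2 : (L - (L - j) = j)%N by lia.
have e3 : (L.+1 - j.+1 = L - j)%N by lia.
by rewrite /Fl e Fk_S e2 e3.
Qed.

Lemma Fl_nest j x y : (j < L.+1)%N -> Fl j.+1 x = Fl j.+1 y -> Fl j x = Fl j y.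
Proof. by move=> hj e; rewrite (Fl_step j x) 1?(Fl_step j y) // e. Qed.

Lemma Fl_dist j x : (j <= L.+1)%N -> d x (Fl j x) <= hqL d q L j.
Proof.
move=> hj; have -> : j = (L.+1 - (L.+1 - j))%N by rewrite subKn.
elim: (L.+1 - j)%N (leq_subr j L.+1) => [|t IH ht].
  by rewrite subn0 Fl_top dxx hqL_top.
have e : (L.+1 - t = (L.+1 - t.+1).+1)%N by lia.
have hj' : (L.+1 - t.+1 <= L)%N by lia.
rewrite (Fl_step _ x) // hqL_step -e.
apply: (le_trans (dtri x (Fl (L.+1 - t) x) _)); rewrite addrC.
apply: lerD; last exact: IH (ltnW ht).
by rewrite e; case: (gm_spec (L.+1 - t.+1) (Fl (L.+1 - t.+1).+1 x)).
Qed.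

Lemma Fl_weight j x y : (j <= L.+1)%N -> Fl j x = Fl j y -> d x y <= 2 * hqL d q L j.
Proof.
move=> hj e; apply: (le_trans (dtri x (Fl j x) y)).
rewrite {2}e (dsym _ y); have h1 := Fl_dist j x hj; have h2 := Fl_dist j y hj; lra.
Qed.

Lemma Fl_range j x : (0 < j)%N -> (j <= L)%N -> Fl j x \in Qj j.
Proof. by move=> j0 jL; rewrite (Fl_step _ x) //; case: (gm_spec j (Fl j.+1 x)) => _ ->. Qed.

Lemma Fl_zero x : Fl 0 x = x0.
Proof. by rewrite (Fl_step _ x). Qed.

Variables (mu s : T -> R) (p C : R).
Hypothesis mu01 : forall x, mu x = 0 \/ mu x = 1.
Hypothesis s01 : forall x, 0 < s x <= 1.
Hypothesis p1 : 1 <= p.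
Hypothesis C0 : 0 < C.

Lemma p0 : 0 < p. Proof. exact: lt_le_trans ltr01 p1. Qed.

Lemma est_ge0 b x : 0 <= bern_est s mu b x.
Proof.
rewrite /bern_est; case: ifP => // _; apply: divr_ge0 => //.
by have := s01 x => /andP[/ltW].
Qed.

Lemma mu_ge0 x : 0 <= mu x.
Proof. by case: (mu01 x) => ->. Qed.

Lemma young_pt (x K : R) : 0 <= x -> 0 < K ->
  powR x p^-1 <= powR K p^-1 * (x / (p * K) + (1 - p^-1)).
Proof.
move=> x0' K0; have pp := p0.
have [/eqP p1e|pn1] := boolP (p == 1).
  rewrite p1e invr1 !powRr1 ?(ltW K0) // subrr addr0; apply: eqle.
  by field; rewrite gt_eqF.
have pgt1 : 1 < p by rewrite lt_neqAle eq_sym pn1 p1.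
set a := powR (x / K) p^-1.
have a0 : 0 <= a by apply: powR_ge0.
have ia : p^-1 < 1 by rewrite invf_lt1.
set q' := (1 - p^-1)^-1.
have q'0 : 0 < q' by rewrite invr_gt0 subr_gt0.
have pq : p^-1 + q'^-1 = 1 by rewrite /q' invrK addrC subrK.
have Y := conjugate_powR a0 ler01 pp q'0 pq.
rewrite mulr1 powR1 in Y.
have ap : powR a p = x / K.
  by rewrite /a -powRrM mulVf ?gt_eqF // powRr1 // divr_ge0 // ltW.
rewrite ap in Y.
have -> : powR x p^-1 = powR K p^-1 * a.
  by rewrite /a -powRM ?(ltW K0) ?divr_ge0 ?(ltW K0) // mulrC divfK // gt_eqF.
apply: ler_wpM2l; first exact: powR_ge0.
apply: (le_trans Y); apply: eqle; rewrite /q' invrK; field.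
by rewrite gt_eqF // gt_eqF.
Qed.

Lemma jensen X K : (forall b, 0 <= X b) -> 0 <= K -> Ex s X <= K ->
  Ex s (fun b => powR (X b) p^-1) <= powR K p^-1.
Proof.
move=> X0 K0 EK; have pp := p0.
have [K00|Kp] := eqVneq K 0.
  have h : forall b, bern_prob s b * X b = 0.
    have : \sum_b bern_prob s b * X b = 0.
      apply/le_anti/andP; split; first by move: EK; rewrite K00.
      by apply: sumr_ge0 => b _; apply: mulr_ge0 => //; apply: P_ge0.
    move/psumr_eq0P => H b; apply: H => // b' _.
    by apply: mulr_ge0 => //; apply: P_ge0.
  rewrite K00 /Ex big1 ?powR_ge0 // => b _.
  have /eqP := h b; rewrite mulf_eq0 => /orP[/eqP ->|/eqP ->]; first by rewrite mul0r.
  by rewrite powR0 ?mulr0 // invr_neq0 // gt_eqF.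
have Kp' : 0 < K by rewrite lt_def Kp K0.
apply: (le_trans (@Ex_le s s01 _ (fun b => powR K p^-1 * (X b / (p * K) + (1 - p^-1))) _)).
  by move=> b; apply: young_pt.
rewrite ExZ ExD Ex_const //.
have -> : Ex s (fun b => X b / (p * K)) = Ex s X / (p * K).
  by rewrite -[in RHS]mulrC -ExZ; apply: Ex_ext => b; rewrite mulrC.
rewrite -[X in _ <= X]mulr1; apply: ler_wpM2l; first exact: powR_ge0.
have : Ex s X / (p * K) <= K / (p * K).
  by rewrite ler_pM2r // invr_gt0 mulr_gt0.
have -> : K / (p * K) = p^-1 by field; rewrite gt_eqF // gt_eqF.
lra.
Qed.

Lemma bound_gen (X : {ffun T -> bool} -> R) K : 0 <= K -> Ex s X <= K ->
  (forall b, exists pi, subcoupling (bern_est s mu b) mu pi /\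
      KR_cost d p C (bern_est s mu b) mu pi <= X b) ->
  expected_KR d p C s mu <= powR K p^-1.
Proof.
move=> K0 EK H; have pp := p0.
have X0 : forall b, 0 <= X b.
  by move=> b; have [pi [sp c]] := H b; apply: le_trans c; apply: cost_ge0 => //; apply: ltW.
apply: (le_trans _ (@jensen X K X0 K0 EK)).
apply: (@Ex_le s s01) => b; have [pi [sp c]] := H b.
apply: (le_trans (@KR_le d p C _ _ pi pp (ltW C0) sp)).
apply: ge0_ler_powR; rewrite ?nnegrE ?invr_ge0 ?(ltW pp) //.
by apply: cost_ge0 => //; apply: ltW.
Qed.

Lemma SF_ge0 F a b : 0 <= SF F a b.
Proof. by apply: sumr_ge0 => c _; apply: normr_ge0. Qed.

Lemma case1 : expected_KR d p C s mu <=
  powR (powR C p / 2) p^-1 * powR (2 * \sum_x (1 - s x)) p^-1.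
Proof.
have pp := p0.
have S0 : 0 <= \sum_x (1 - s x).
  by apply: sumr_ge0 => x _; have := s01 x => /andP[_]; rewrite subr_ge0.
have Cp : 0 <= powR C p / 2 by apply: divr_ge0 => //; apply: powR_ge0.
rewrite -powRM //; last by apply: mulr_ge0.
apply: (@bound_gen (fun b => powR C p / 2 * SF id (bern_est s mu b) mu)).
- by apply: mulr_ge0 => //; apply: mulr_ge0.
- by rewrite ExZ; apply: ler_wpM2l => //; exact: (@ESF1 s s01 mu mu01).
- move=> b; have [pi hpi] := @base_plan d p (bern_est s mu b) mu pp dxx (est_ge0 b) mu_ge0.
  exists pi; split; first by case: hpi.
  apply: (le_trans (@cost_Qinv d p C _ _ _ _ pi hpi (ltW C0))); rewrite add0r.
  by apply: eqle; rewrite mulrA mulrAC.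
Qed.

Definition wl (j : nat) : R := powR (2 * hqL d q L j) p.
Definition est b := bern_est s mu b.
Definition Xm (m : nat) (b : {ffun T -> bool}) : R :=
  \sum_(m <= j < L.+1) wl j / 2 * SF (Fl j.+1) (est b) mu
  + (powR C p / 2 - wl m / 2) * SF (Fl m) (est b) mu.
Definition VV := \sum_x (1 - s x) / s x.

Lemma VV_ge0 : 0 <= VV.
Proof. by apply: sumr_ge0 => x _; have := s01 x => /andP[h1 h2]; apply: divr_ge0; lra. Qed.

Lemma wl_ge0 j : 0 <= wl j. Proof. exact: powR_ge0. Qed.

Lemma plan_m m b : (m <= L)%N -> exists pi, subcoupling (est b) mu pi /\
  KR_cost d p C (est b) mu pi <= Xm m b.
Proof.
move=> mL; have pp := p0.
have wb : forall j x y, (j < L.+1)%N -> Fl j x = Fl j y -> powR (d x y) p <= wl j.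
  move=> j x y hj e; have h := @Fl_weight j x y (ltnW hj) e.
  apply: ge0_ler_powR; rewrite ?nnegrE ?(ltW pp) ?d_ge0 //.
  exact: le_trans (d_ge0 x y) h.
have [pi hpi] := @iter_plan d p (est b) mu Fl wl L.+1 pp dxx (est_ge0 b) mu_ge0
   Fl_top Fl_nest wb wl_ge0 m (leqW mL).
exists pi; split; first by case: hpi.
apply: (le_trans (@cost_Qinv d p C _ _ _ _ pi hpi (ltW C0))).
have T1 := @telescope wl (fun j => SF (Fl j) (est b) mu) m L.+1 mL wl_ge0 (fun j => SF_ge0 _ _ _).
have -> : Xm m b = (\sum_(m <= j < L.+1) wl j / 2 * SF (Fl j.+1) (est b) mu
            - wl m / 2 * SF (Fl m) (est b) mu) + powR C p * (SF (Fl m) (est b) mu / 2).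
  by rewrite /Xm; ring.
by apply: lerD.
Qed.

Lemma Ex_sumn (r : seq nat) (X : nat -> {ffun T -> bool} -> R) :
  Ex s (fun b => \sum_(j <- r) X j b) = \sum_(j <- r) Ex s (X j).
Proof.
rewrite /Ex; under eq_bigr do rewrite mulr_sumr.
by rewrite exchange_big.
Qed.

Lemma Ex_ge0 X : (forall b, 0 <= X b) -> 0 <= Ex s X.
Proof. by move=> h; apply: sumr_ge0 => b _; apply: mulr_ge0 => //; apply: P_ge0. Qed.

Lemma EXm m : Ex s (Xm m) = \sum_(m <= j < L.+1) wl j / 2 * Ex s (fun b => SF (Fl j.+1) (est b) mu)
  + (powR C p / 2 - wl m / 2) * Ex s (fun b => SF (Fl m) (est b) mu).
Proof.
rewrite /Xm ExD ExZ Ex_sumn; congr (_ + _); apply: eq_bigr => j _; exact: ExZ.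
Qed.

Lemma ESF_top : Ex s (fun b => SF (Fl L.+1) (est b) mu) <= Num.sqrt (#|T|%:R) * Num.sqrt VV.
Proof.
have := @ESF s s01 mu mu01 (Fl L.+1) [set: T]%SET (fun x => finset.in_setT _).
by rewrite cardsT.
Qed.

Lemma ESF_mid j : (0 < j)%N -> (j <= L)%N ->
  Ex s (fun b => SF (Fl j) (est b) mu) <= Num.sqrt ((Qcard d q j)%:R) * Num.sqrt VV.
Proof.
move=> j0 jL.
apply: (le_trans (@ESF s s01 mu mu01 (Fl j) (Qj j) (fun x => @Fl_range j x j0 jL))).
apply: ler_wpM2r; first exact: sqrtr_ge0.
rewrite ler_sqrt ?ler0n // ler_nat.
by case/andP: (Qj_spec j).
Qed.

Lemma ESF_zero : Ex s (fun b => SF (Fl 0) (est b) mu) <= Num.sqrt VV.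
Proof.
have := @ESF s s01 mu mu01 (Fl 0) [set x0]%SET (fun x => etrans (congr1 _ (Fl_zero x)) (set11 x0)).
by rewrite cards1 sqrtr1 mul1r.
Qed.

Lemma hw h : 0 <= h -> powR (2 * h) p / 2 = powR 2 (p - 1) * powR h p.
Proof.
move=> h0; have two : (2:R) != 0 by rewrite pnatr_eq0.
by rewrite powRM // powRB ?two ?implybT // powRr1 // mulrAC.
Qed.

Lemma Wbound j : (j <= L)%N -> wl j / 2 <=
  powR (diam d) p * powR 2 (p - 1) * (powR (q / (q - 1)) p * powR q (p - j.+1%:R * p)).
Proof.
move=> jL; have pp := p0.
have h0 := @hqL_ge0 j (leqW jL).
have D0 := diam_ge0.
have q0 : 0 < q by exact: lt_trans ltr01 q1.
have qq : 0 <= q / (q - 1) by apply: divr_ge0; rewrite ?subr_ge0 ltW.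
rewrite /wl hw //.
have H : powR (hqL d q L j) p <= powR (q / (q - 1) * powR q (- j%:R) * diam d) p.
  apply: ge0_ler_powR; rewrite ?nnegrE ?(ltW pp) //; last exact: hqL_le.
  by apply: mulr_ge0 => //; apply: mulr_ge0 => //; apply: powR_ge0.
have E : powR (q / (q - 1) * powR q (- j%:R) * diam d) p =
    powR (q / (q - 1)) p * powR q (p - j.+1%:R * p) * powR (diam d) p.
  rewrite powRM //; last by apply: mulr_ge0 => //; apply: powR_ge0.
  rewrite powRM //; last by apply: powR_ge0.
  rewrite -powRrM; congr (_ * powR q _ * _); rewrite -natr1; ring.
rewrite E in H.
apply: le_trans (ler_wpM2l (powR_ge0 _ _) H) _; apply: eqle; ring.
Qed.

Lemma wlL : wl L / 2 = powR (diam d) p * powR 2 (p - 1) * powR q (- L%:R * p).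
Proof.
have D0 := diam_ge0.
rewrite /wl hw ?hqL_ge0 // hqL_L powRM ?powR_ge0 // -powRrM; ring.
Qed.

Definition ti (i : nat) : R := powR (diam d) p * powR 2 (p - 1) *
  (powR (q / (q - 1)) p * (powR q (p - i%:R * p) * Num.sqrt ((Qcard d q i)%:R))).
Definition base : R := powR (diam d) p * powR 2 (p - 1) *
  (powR q (- L%:R * p) * Num.sqrt (#|T|%:R)).

Lemma Aconst_split l : Aconst d q p L l = base + \sum_(l <= i < L.+1) ti i.
Proof. by rewrite /Aconst mulrDr /ti -!mulr_sumr. Qed.

Lemma ti_ge0 i : 0 <= ti i.
Proof.
by rewrite /ti; repeat apply: mulr_ge0; rewrite ?powR_ge0 ?sqrtr_ge0.
Qed.

Lemma base_ge0 : 0 <= base.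
Proof. by rewrite /base; repeat apply: mulr_ge0; rewrite ?powR_ge0 ?sqrtr_ge0. Qed.

Lemma Aconst_ge0 l : 0 <= Aconst d q p L l.
Proof. by rewrite Aconst_split addr_ge0 ?base_ge0 // sumr_ge0 // => i _; apply: ti_ge0. Qed.

Lemma SB m : (m <= L)%N ->
  \sum_(m <= j < L.+1) wl j / 2 * Ex s (fun b => SF (Fl j.+1) (est b) mu) <=
  (base + \sum_(m.+1 <= i < L.+1) ti i) * Num.sqrt VV.
Proof.
move=> mL; have sV := sqrtr_ge0 VV.
rewrite big_nat_recr //= mulrDl addrC; apply: lerD.
  apply: le_trans (ler_wpM2l _ ESF_top) _.
    by apply: divr_ge0 => //; apply: wl_ge0.
  by rewrite wlL /base; apply: eqle; ring.
rewrite big_add1 /= mulr_suml; apply: ler_sum_nat => j /andP[hm hj].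
have e1 := @ESF_mid j.+1 (ltn0Sn j) hj.
have e2 := @Wbound j (ltnW hj).
apply: le_trans (ler_pM _ _ e2 e1) _.
- by apply: divr_ge0 => //; apply: wl_ge0.
- by apply: Ex_ge0 => b; apply: SF_ge0.
- by rewrite /ti; apply: eqle; ring.
Qed.

Lemma powconv E : 0 <= E ->
  powR (E * Num.sqrt VV) p^-1 = powR E p^-1 * powR VV (2 * p)^-1.
Proof.
move=> E0; rewrite powRM ?sqrtr_ge0 //; congr (_ * _).
by rewrite -powR12_sqrt ?VV_ge0 // -powRrM invfM.
Qed.

Lemma case2a : 2 * hqL d q L 0 <= C ->
  expected_KR d p C s mu <=
  powR ((powR C p / 2 - powR 2 (p - 1) * powR (hqL d q L 0) p) + Aconst d q p L 1) p^-1
  * powR VV (2 * p)^-1.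
Proof.
move=> hC0; have pp := p0.
have h00 := @hqL_ge0 0 (leq0n _).
have hw0 : wl 0 / 2 = powR 2 (p - 1) * powR (hqL d q L 0) p by rewrite /wl hw.
have wC : wl 0 <= powR C p.
  apply: ge0_ler_powR; rewrite ?nnegrE ?(ltW pp) ?(ltW C0) //.
  by apply: mulr_ge0.
have k0 : 0 <= powR C p / 2 - wl 0 / 2 by lra.
set E := (_ + Aconst d q p L 1).
have E0 : 0 <= E by rewrite /E -hw0 addr_ge0 // Aconst_ge0.
rewrite -powconv //.
apply: (@bound_gen (Xm 0) _ (mulr_ge0 E0 (sqrtr_ge0 _))).
- rewrite EXm; apply: (le_trans (lerD (@SB 0 (leq0n L)) (ler_wpM2l k0 ESF_zero))).
  by rewrite /E Aconst_split -hw0; apply: eqle; ring.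
- by move=> b; apply: plan_m.
Qed.

Lemma sum_ge_term (P : pred nat) (F : nat -> R) a b i : (a <= i < b)%N -> P i ->
  (forall j, 0 <= F j) -> F i <= \sum_(a <= j < b | P j) F j.
Proof.
move=> hi Pi F0; rewrite big_mkcond (bigD1_seq i) /=; first last.
- by rewrite /index_iota iota_uniq.
- by rewrite mem_index_iota.
rewrite Pi lerDl; apply: sumr_ge0 => j _; case: ifP => //.
Qed.

Lemma case2b : ~~ (C <= Num.max (2 * hqL d q L L) (min_dist d)) ->
  ~~ (2 * hqL d q L 0 <= C) ->
  expected_KR d p C s mu <=
  powR (\sum_(1 <= l < L.+1 | (2 * hqL d q L l <= C) && (C < 2 * hqL d q L l.-1))
          Aconst d q p L l) p^-1 * powR VV (2 * p)^-1.
Proof.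
move=> hC hC0; have pp := p0.
have hM : Num.max (2 * hqL d q L L) (min_dist d) < C by rewrite ltNge.
have hL : 2 * hqL d q L L < C.
  by apply: le_lt_trans hM; rewrite le_max lexx.
pose P l := 2 * hqL d q L l <= C.
have exP : exists n, P n by exists L; rewrite /P ltW.
case: (ex_minnP exP) => l0 Pl0 minl0.
have l0L : (l0 <= L)%N by apply: minl0; rewrite /P ltW.
have l00 : (0 < l0)%N.
  by case: l0 Pl0 {minl0 l0L} => // P0; move: hC0; rewrite /P in P0; rewrite P0.
have Cl : C < 2 * hqL d q L l0.-1.
  rewrite ltNge; apply/negP => h.
  have := minl0 l0.-1 h; lia.
have hpos : 0 <= hqL d q L l0.-1 by apply: hqL_ge0; rewrite (leq_trans (leq_pred _)) // leqW.
set E := \sum_(_ <= _ < _ | _) _.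
have E0 : 0 <= E by apply: sumr_ge0 => l _; apply: Aconst_ge0.
have AE : Aconst d q p L l0 <= E.
  apply: sum_ge_term; first by rewrite l00 ltnS.
    by apply/andP; split.
  exact: Aconst_ge0.
rewrite -powconv //.
apply: (@bound_gen (Xm l0) _ (mulr_ge0 E0 (sqrtr_ge0 _))); last first.
  by move=> b; apply: plan_m.
apply: (le_trans _ (ler_wpM2r (sqrtr_ge0 VV) AE)).
rewrite EXm Aconst_split [X in _ <= (_ + X) * _]big_ltn ?ltnS //.
have SE := @Ex_ge0 (fun b => SF (Fl l0) (est b) mu) (fun b => SF_ge0 _ _ _).
have Cw : powR C p / 2 <= wl l0.-1 / 2.
  rewrite ler_pM2r ?invr_gt0 // /wl; apply: ge0_ler_powR; rewrite ?nnegrE ?(ltW pp) ?(ltW C0) ?ltW //.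
  exact: lt_trans C0 Cl.
have W := @Wbound l0.-1 (leq_trans (leq_pred _) l0L).
rewrite prednK // in W.
have e1 := @ESF_mid l0 l00 l0L.
have t1 : (powR C p / 2 - wl l0 / 2) * Ex s (fun b => SF (Fl l0) (est b) mu)
          <= ti l0 * Num.sqrt VV.
  apply: (@le_trans _ _ (powR C p / 2 * Ex s (fun b => SF (Fl l0) (est b) mu))).
    apply: ler_wpM2r => //; rewrite gerBl; apply: divr_ge0 => //; apply: wl_ge0.
  apply: le_trans (ler_pM _ _ (le_trans Cw W) e1) _.
  - by apply: divr_ge0 => //; apply: powR_ge0.
  - exact: SE.
  - by rewrite /ti; apply: eqle; ring.
have := @SB l0 l0L.
move: t1; set S1 := \sum_(_ <= _ < _) _; set S2 := \sum_(_ <= _ < _) _.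
move=> t1 t2.
have := lerD t2 t1.
move=> h; apply: (le_trans h); apply: eqle; ring.
Qed.

Lemma main_geo : expected_KR d p C s mu <=
  powR (Econst d p C q L) p^-1 *
  (if C <= Num.max (2 * hqL d q L L) (min_dist d)
   then powR (2 * \sum_(x : T) (1 - s x)) p^-1
   else powR (\sum_(x : T) (1 - s x) / s x) (2 * p)^-1).
Proof.
rewrite /Econst; case: ifP => hC; first exact: case1.
case: ifP => hC0; first exact: case2a.
by apply: case2b; apply/negbT.
Qed.

End Geo.

End All.

Theorem theoremB2 (R : realType) (T : finType) (d : T -> T -> R)
  (mu s : T -> R) (p C q : R) (L : nat) :
  is_metric d -> (1 < #|T|)%N ->
  (forall x, mu x = 0 \/ mu x = 1) ->
  (forall x, 0 < s x <= 1) ->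
  1 <= p -> 0 < C -> 1 < q ->
  expected_KR d p C s mu <=
  powR (Econst d p C q L) p^-1 *
  (if C <= Num.max (2 * hqL d q L L) (min_dist d)
   then powR (2 * \sum_(x : T) (1 - s x)) p^-1
   else powR (\sum_(x : T) (1 - s x) / s x) (2 * p)^-1).
Proof.
move=> dm n2 mu01 s01 p1 C0 q1.
have : (0 < #|T|)%N by apply: ltnW.
case/card_gt0P => x0 _.
exact: (@main_geo R T d q L x0 dm q1 mu s p C mu01 s01 p1 C0).
Qed.
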